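(* For all integers $m\ge 2$, $n\ge 2$, the state complexity of the combined operation $L(M)^*\cup L(N)$, where $M$ ranges over complete DFAs with $m$ states and $N$ over complete DFAs with $n$ states (over a common alphabet), is exactly $\frac{3}{4}2^m\cdot n-n+1$. That is, for every such $M,N$ some DFA with at most $\frac{3}{4}2^m\cdot n-n+1$ states accepts $L(M)^*\cup L(N)$, and there exist such $M,N$ for which the minimal complete DFA of $L(M)^*\cup L(N)$ has exactly $\frac{3}{4}2^m\cdot n-n+1$ states.
   Context: DFAs are complete deterministic finite automata $(Q,\Sigma,\delta,s,F)$; $L(M)$ is the accepted language; $L^*$ is the Kleene star. The state complexity of a regular language is the number of states of its minimal complete DFA; the state complexity of an operation is the maximum state complexity of its result over all argument DFAs of the given sizes. *)

(* Defs.v *)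
From mathcomp Require Import all_boot.
Set Implicit Arguments. Unset Strict Implicit. Unset Printing Implicit Defensive.

Record dfa (S : finType) (k : nat) := DFA {
  delta : 'I_k -> S -> 'I_k;
  start : 'I_k;
  final : {set 'I_k}
}.

Definition dfa_run (S : finType) (k : nat) (A : dfa S k) (q : 'I_k) (w : seq S) : 'I_k :=
  foldl (delta A) q w.

Definition accepts (S : finType) (k : nat) (A : dfa S k) (w : seq S) : Prop :=
  dfa_run A (start A) w \in final A.

Definition kstar (S : finType) (L : seq S -> Prop) (w : seq S) : Prop :=
  exists ws : seq (seq S), flatten ws = w /\ (forall u, u \in ws -> L u).

Definition star_union (S : finType) (m n : nat) (M : dfa S m) (N : dfa S n)
  (w : seq S) : Prop :=
  kstar (accepts M) w \/ accepts N w.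

Definition recognizes (S : finType) (k : nat) (D : dfa S k) (L : seq S -> Prop) : Prop :=
  forall w, accepts D w <-> L w.

Definition sc_eq (S : finType) (L : seq S -> Prop) (k : nat) : Prop :=
  (exists D : dfa S k, recognizes D L) /\
  (forall j (D : dfa S j), recognizes D L -> k <= j).

(* (3/4) 2^m n - n + 1, written over nat for m >= 2. *)
Definition sc_bound (m n : nat) : nat := 3 * 2 ^ (m - 2) * n - n + 1.

(* Main.v *)
Require Import Defs.
From mathcomp Require Import all_boot.
From Stdlib Require Import Setoid Lia.
Set Implicit Arguments. Unset Strict Implicit. Unset Printing Implicit Defensive.

Lemma reduce_dfa (S T : finType) (d : T -> S -> T) (t0 : T) (acc : pred T) (R : {set T})
  (H0 : t0 \in R) (HR : forall t a, t \in R -> d t a \in R) :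
  exists D : dfa S #|R|, forall w, accepts D w <-> acc (foldl d t0 w).
Proof.
pose D := DFA (fun i a => enum_rank_in H0 (d (enum_val i) a)) (enum_rank_in H0 t0)
   [set i | acc (enum_val i)].
exists D => w.
have key : forall t, t \in R -> enum_val (dfa_run D (enum_rank_in H0 t) w) = foldl d t w.
  elim: w => [|a w IH] t Ht; first by rewrite /dfa_run /= enum_rankK_in.
  rewrite /dfa_run /= enum_rankK_in //; exact: IH (HR _ _ Ht).
by rewrite /accepts inE key.
Qed.

Lemma pad_dfa (S : finType) k j (D : dfa S k) : k <= j ->
  exists D' : dfa S j, forall w, accepts D' w <-> accepts D w.
Proof.
move=> le; pose w0 := widen_ord le.
pose pr (q : 'I_j) : 'I_k := insubd (start D) (val q).
have prK x : pr (w0 x) = x by apply: val_inj; rewrite /pr val_insubd /= ltn_ord.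
pose D' := DFA (fun q a => w0 (delta D (pr q) a)) (w0 (start D)) (w0 @: final D).
exists D' => w; rewrite /accepts /=.
have key : forall x, dfa_run D' (w0 x) w = w0 (dfa_run D x w).
  elim: w => [|a w IH] x //; rewrite /dfa_run /= prK; exact: IH.
rewrite key mem_imset // => x y /(congr1 val) /= H; exact: val_inj.
Qed.

Lemma mn_lower (S : finType) (L : seq S -> Prop) (T : finType) (R : {set T})
  (wd : T -> seq S)
  (dist : forall t1 t2, t1 \in R -> t2 \in R -> t1 != t2 ->
     exists z, ~ (L (wd t1 ++ z) <-> L (wd t2 ++ z))) :
  forall j (D : dfa S j), recognizes D L -> #|R| <= j.
Proof.
move=> j D rec.
have runcat : forall q u v, dfa_run D q (u ++ v) = dfa_run D (dfa_run D q u) v.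
  by move=> q u v; rewrite /dfa_run foldl_cat.
pose g t := dfa_run D (start D) (wd t).
rewrite -(card_in_imset (f := g)); first by apply: leq_trans (max_card _) _; rewrite card_ord.
move=> t1 t2 h1 h2 /= eq; apply/eqP; apply/negP => /negP ne.
have [z Hz] := dist _ _ h1 h2 ne; apply: Hz.
have E : dfa_run D (start D) (wd t1 ++ z) = dfa_run D (start D) (wd t2 ++ z).
  by rewrite !runcat; rewrite /g in eq; rewrite eq.
split=> /rec; rewrite /accepts => H; apply/rec; rewrite /accepts; [by rewrite -E | by rewrite E].
Qed.

Definition stepX (S : finType) m (M : dfa S m) (X : {set 'I_m}) (a : S) : {set 'I_m} :=
  if [set delta M x a | x in X] :&: final M != set0
  then start M |: [set delta M x a | x in X] else [set delta M x a | x in X].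

Definition sdelta (S : finType) m n (M : dfa S m) (N : dfa S n)
  (t : option ({set 'I_m} * 'I_n)) (a : S) : option ({set 'I_m} * 'I_n) :=
  match t with
  | None => Some (stepX M [set start M] a, delta N (start N) a)
  | Some (X, q) => Some (stepX M X a, delta N q a)
  end.

Definition sacc (S : finType) m n (M : dfa S m) (N : dfa S n)
  (t : option ({set 'I_m} * 'I_n)) : bool :=
  match t with
  | None => true
  | Some (X, q) => (X :&: final M != set0) || (q \in final N)
  end.

Definition sem (S : finType) m (M : dfa S m) (X : {set 'I_m}) (w : seq S) : Prop :=
  exists x, x \in X /\ exists u v, w = u ++ v /\ dfa_run M x u \in final M /\
     kstar (accepts M) v.

Lemma kstar_nil (S : finType) (L : seq S -> Prop) : kstar L [::].
Proof. by exists [::]. Qed.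

Lemma kstar_cat (S : finType) (L : seq S -> Prop) u v : L u -> kstar L v -> kstar L (u ++ v).
Proof.
move=> Lu [ws [<- Hws]]; exists (u :: ws); split => // x; rewrite inE => /orP [/eqP -> //|].
exact: Hws.
Qed.

Lemma kstar_cons (S : finType) (L : seq S -> Prop) a w : kstar L (a :: w) ->
  exists u v, w = u ++ v /\ L (a :: u) /\ kstar L v.
Proof.
move=> [ws [E H]]; elim: ws E H => [//|x ws IH] /= E H.
case: x E H => [|b x] /= E H.
  apply: IH E _ => u uin; apply: H; by rewrite inE uin orbT.
case: E => <- <-; exists x, (flatten ws); split => //; split.
  by apply: H; rewrite inE eqxx.
exists ws; split => // u uin; apply: H; by rewrite inE uin orbT.
Qed.

Lemma mem_stepX (S : finType) m (M : dfa S m) (X : {set 'I_m}) a x : x \in X -> delta M x a \in stepX M X a.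
Proof.
move=> xX; have h : delta M x a \in [set delta M x a | x in X] by apply: imset_f.
by rewrite /stepX; case: ifP => _ //; rewrite in_setU1 h orbT.
Qed.

Lemma stepX_inv (S : finType) m (M : dfa S m) (X : {set 'I_m}) a y : y \in stepX M X a ->
  (exists2 x, x \in X & y = delta M x a) \/
  (y = start M /\ exists2 x, x \in X & delta M x a \in final M).
Proof.
rewrite /stepX; case: ifP => [/set0Pn [z /setIP [zY zF]] | _].
  rewrite in_setU1 => /orP [/eqP ->|/imsetP h]; last by left.
  right; split => //; case/imsetP: zY => x xX zE; exists x => //; by rewrite -zE.
by move/imsetP => h; left.
Qed.

Definition Inv (S : finType) m (M : dfa S m) (X : {set 'I_m}) : bool :=
  (X :&: final M != set0) ==> (start M \in X).

Lemma Inv_step (S : finType) m (M : dfa S m) (X : {set 'I_m}) a : Inv M (stepX M X a).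
Proof.
rewrite /Inv /stepX; case: ifP => [_|/negbT]; first by rewrite in_setU1 eqxx implybT.
by rewrite negbK => /eqP ->; rewrite eqxx.
Qed.

Lemma sem_nil (S : finType) m (M : dfa S m) (X : {set 'I_m}) : sem M X [::] <-> (X :&: final M != set0).
Proof.
split.
  move=> [x [xX [u [v [E [Hu _]]]]]]; case: u E Hu => [|//] _ Hu.
  by apply/set0Pn; exists x; rewrite inE xX.
move/set0Pn => [x /setIP [xX xF]]; exists x; split => //; exists [::], [::]; split => //.
split => //; exact: kstar_nil.
Qed.

Lemma sem_step (S : finType) m (M : dfa S m) (X : {set 'I_m}) a w : Inv M X ->
  (sem M X (a :: w) <-> sem M (stepX M X a) w).
Proof.
move=> inv; split.
  move=> [x [xX [u [v [E [Hu Hv]]]]]].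
  case: u E Hu => [|b u] /= E Hu.
    have sX : start M \in X.
      move: inv; rewrite /Inv => /implyP; apply; apply/set0Pn; exists x; by rewrite inE xX Hu.
    rewrite -E in Hv; have [u' [v' [Ew [Hu' Hv']]]] := kstar_cons Hv.
    exists (delta M (start M) a); split; first exact: mem_stepX.
    by exists u', v'.
  case: E => Eb Ew; subst b; exists (delta M x a); split; first exact: mem_stepX.
  by exists u, v.
move=> [y [/stepX_inv [[x xX ->]|[-> [x xX xF]]] [u [v [E [Hu Hv]]]]]].
  by exists x; split => //; exists (a :: u), v; rewrite E.
exists x; split => //; exists [:: a], w; split => //; split => //.
rewrite E; exact: kstar_cat.
Qed.

Lemma sem_fold (S : finType) m (M : dfa S m) (X : {set 'I_m}) w : Inv M X ->
  (sem M X w <-> (foldl (stepX M) X w :&: final M != set0)).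
Proof.
elim: w X => [|a w IH] X inv; first exact: sem_nil.
rewrite sem_step //=; exact: IH (Inv_step _ _ _).
Qed.

Lemma sem_start (S : finType) m (M : dfa S m) a w :
  sem M [set start M] (a :: w) <-> kstar (accepts M) (a :: w).
Proof.
split.
  move=> [x [/set1P -> [u [v [-> [Hu Hv]]]]]]; exact: kstar_cat.
move/kstar_cons => [u [v [-> [Hu Hv]]]].
by exists (start M); split; [rewrite inE|exists (a :: u), v].
Qed.

Lemma sfold_some (S : finType) m n (M : dfa S m) (N : dfa S n) (X : {set 'I_m}) q w :
  foldl (sdelta M N) (Some (X, q)) w = Some (foldl (stepX M) X w, dfa_run N q w).
Proof. by elim: w X q => [|a w IH] X q //=; rewrite IH. Qed.

Lemma sdelta_correct (S : finType) m n (M : dfa S m) (N : dfa S n) w :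
  sacc M N (foldl (sdelta M N) None w) <-> star_union M N w.
Proof.
case: w => [|a w].
  by split => // _; left; exact: kstar_nil.
rewrite /= sfold_some /= /star_union -sem_start sem_step; last first.
  by rewrite /Inv in_set1 eqxx implybT.
rewrite sem_fold; last exact: Inv_step.
rewrite /accepts /dfa_run /=.
by split => [/orP [h|h]|[h|h]]; [left|right| |]; rewrite ?h ?orbT.
Qed.

Definition RR m n (PS : {set {set 'I_m}}) : {set option ({set 'I_m} * 'I_n)} :=
  None |: (Some @: setX PS [set: 'I_n]).

Lemma card_RR m n (PS : {set {set 'I_m}}) : #|RR n PS| = 1 + #|PS| * n.
Proof.
rewrite /RR cardsU1 card_imset; last by move=> x y [].
rewrite cardsX cardsT card_ord; congr (_ + _).
by apply/eqP; rewrite eqb1; apply/imsetP => -[].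
Qed.

Lemma mem_RR_some m n (PS : {set {set 'I_m}}) X q : (Some (X, q) \in RR n PS) = (X \in PS).
Proof.
rewrite /RR in_setU1 /= mem_imset; last by move=> x y [].
by rewrite !inE andbT.
Qed.

Lemma RR_closed (S : finType) m n (M : dfa S m) (N : dfa S n) (PS : {set {set 'I_m}}) :
  (forall a, stepX M [set start M] a \in PS) ->
  (forall X a, X \in PS -> stepX M X a \in PS) ->
  forall t a, t \in RR n PS -> sdelta M N t a \in RR n PS.
Proof.
move=> h0 h1 [[X q]|] a /=; rewrite !mem_RR_some //; [exact: h1 | move=> _; exact: h0].
Qed.

Ltac prep := repeat match goal with
 | H : is_true (_ <= _) |- _ => apply (elimT leP) in H
 end.
Ltac nlia := repeat match goal with
 | H : is_true (_ <= _) |- _ => revert H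
 | H : @eq nat _ _ |- _ => revert H end;
 rewrite -?plusE -?minusE -?multE; intros; prep; try apply/leP; lia.

Lemma pow_lin k : k + 3 <= 3 * 2 ^ k.
Proof. elim: k => // k IH; rewrite expnS; nlia. Qed.

Lemma m_small m : 2 <= m -> m <= 3 * 2 ^ (m - 2) - 1.
Proof.
case: m => [|[|k]] // _; have := pow_lin k.
have -> : k.+2 - 2 = k by rewrite subSS subSS subn0.
move=> h; nlia.
Qed.

Definition PSB m (f s : 'I_m) : {set {set 'I_m}} :=
  [set X : {set 'I_m} | (X != set0) && ((f \in X) ==> (s \in X))].

Definition Bad m (f s : 'I_m) : {set {set 'I_m}} := [set X : {set 'I_m} | (f \in X) && (s \notin X)].

Lemma card_setset m : #|{set 'I_m}| = 2 ^ m.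
Proof. by rewrite -cardsT -powersetT card_powerset cardsT card_ord. Qed.

Lemma card_Bad_ge m (f s : 'I_m) : f != s -> 2 ^ (m - 2) <= #|Bad f s|.
Proof.
move=> fs.
pose C := ~: [set f; s].
have cC : #|C| = m - 2.
  have := cardsC [set f; s]; rewrite cards2 fs card_ord /C /= => h; move: h; clear; nlia.
have nf : forall Z : {set 'I_m}, Z \subset C -> f \notin Z.
  move=> Z sub; apply/negP => fZ; have := subsetP sub _ fZ; by rewrite !inE eqxx.
rewrite -cC -card_powerset -(card_in_imset (f := fun Z => f |: Z)).
  apply: subset_leq_card; apply/subsetP => X /imsetP [Z]; rewrite powersetE => sub ->.
  rewrite inE in_setU1 eqxx /= in_setU1 negb_or eq_sym fs /=.
  apply/negP => sZ; have := subsetP sub _ sZ; by rewrite !inE eqxx orbT.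
move=> Z1 Z2; rewrite !powersetE => s1 s2 /= E.
by rewrite -(setU1K (nf _ s1)) E setU1K // nf.
Qed.

Lemma card_PSB m (f s : 'I_m) : f != s -> 2 <= m -> #|PSB f s| <= 3 * 2 ^ (m - 2) - 1.
Proof.
move=> fs hm.
have sub : PSB f s \subset ~: (set0 |: Bad f s).
  apply/subsetP => X; rewrite !inE => /andP [X0 H]; rewrite negb_or X0 /= negb_and negbK.
  by move: H; case: (f \in X).
have c1 := subset_leq_card sub.
have c2 := cardsC (set0 |: Bad f s).
rewrite cardsU1 card_setset in c2.
have c3 : set0 \notin Bad f s by rewrite inE in_set0.
rewrite c3 in c2.
have c4 := card_Bad_ge fs.
have e : 2 ^ m = 4 * 2 ^ (m - 2) by rewrite -{1}(subnK hm) expnD mulnC.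
rewrite e /= in c2. move: c1 c2 c4; clear. rewrite -?plusE -?minusE -?multE; intros; prep; try apply/leP. set x := #|~: (set0 |: Bad f s)| in c1 c2. set y := #|Bad f s| in c2 c4. set z := 2 ^ _ in c2 c4 *. lia.
Qed.

Definition PSA m : {set {set 'I_m}} := [set [set x] | x : 'I_m].

Lemma card_PSA m : #|PSA m| <= m.
Proof. by apply: leq_trans (leq_imset_card _ _) _; rewrite card_ord. Qed.

Lemma PSA_step (S : finType) m (M : dfa S m) x a : final M \subset [set start M] ->
  stepX M [set x] a \in PSA m.
Proof.
move=> hF; rewrite /stepX imset_set1; case: ifP => [/set0Pn [z /setIP [/set1P zE zF]] | _].
  have e : delta M x a = start M by move/subsetP: hF => /(_ _ zF) /set1P; rewrite zE.
  rewrite e; apply/imsetP; exists (start M) => //; apply/setP => y; by rewrite !inE orbb.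
by apply/imsetP; exists (delta M x a).
Qed.

Lemma PSB_step (S : finType) m (M : dfa S m) f X a : f \in final M ->
  X \in PSB f (start M) -> stepX M X a \in PSB f (start M).
Proof.
move=> fF; rewrite inE => /andP [X0 _]; rewrite /stepX; case: ifP => [_|/negbT H].
  rewrite inE; apply/andP; split; [apply/set0Pn; exists (start M) | apply/implyP => _];
  by rewrite in_setU1 eqxx.
rewrite inE imset_eq0 X0 /=; apply/implyP => fY; exfalso.
move: H; rewrite negbK => /eqP /setP /(_ f); by rewrite !inE fY fF.
Qed.

Lemma PSB_start m (f s : 'I_m) : [set s] \in PSB f s.
Proof.
rewrite inE; apply/andP; split; [apply/set0Pn; exists s | apply/implyP => _];
  by rewrite in_set1.
Qed.

Lemma upper (S : finType) m n (M : dfa S m) (N : dfa S n) : 2 <= m ->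
  exists k, k <= sc_bound m n /\ exists D : dfa S k, recognizes D (star_union M N).
Proof.
move=> hm.
have [PS [c0 c1 hPS]] : exists PS : {set {set 'I_m}},
   [/\ (forall a, stepX M [set start M] a \in PS),
   (forall X a, X \in PS -> stepX M X a \in PS) & #|PS| <= 3 * 2 ^ (m - 2) - 1].
  case: (boolP (final M \subset [set start M])) => hF.
    exists (PSA m); split; last exact: leq_trans (card_PSA m) (m_small hm).
      by move=> a; apply: PSA_step.
    by move=> X a /imsetP [x _ ->]; apply: PSA_step.
  case/subsetPn: hF => f fF fs; rewrite in_set1 in fs.
  exists (PSB f (start M)); split; last exact: card_PSB.
    by move=> a; apply: PSB_step (PSB_start _ _).
  by move=> X a; apply: PSB_step.
exists #|RR n PS|; split.
  rewrite card_RR /sc_bound addnC leq_add2r.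
  by have := leq_mul hPS (leqnn n); rewrite mulnBl mul1n.
have H0 : None \in RR n PS by rewrite /RR in_setU1 eqxx.
have [D HD] := @reduce_dfa S _ (sdelta M N) None (sacc M N) (RR n PS) H0 (@RR_closed S m n M N PS c0 c1).
exists D => w; rewrite HD; exact: sdelta_correct.
Qed.

Lemma card_Bad_le m (f s : 'I_m) : f != s -> #|Bad f s| <= 2 ^ (m - 2).
Proof.
move=> fs.
pose C := ~: [set f; s].
have cC : #|C| = m - 2.
  have := cardsC [set f; s]; rewrite cards2 fs card_ord /C /= => h; move: h; clear; nlia.
rewrite -cC -card_powerset; apply: leq_trans (leq_imset_card (fun Z => f |: Z) _).
apply: subset_leq_card; apply/subsetP => X; rewrite inE => /andP [fX sX].
apply/imsetP; exists (X :\ f); last by rewrite setD1K.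
rewrite powersetE; apply/subsetP => y; rewrite !inE => /andP [yf yX].
rewrite negb_or yf /=; apply/negP => /eqP ys; by rewrite -ys yX in sX.
Qed.

Lemma card_PSB_ge m (f s : 'I_m) : f != s -> 2 <= m -> 3 * 2 ^ (m - 2) - 1 <= #|PSB f s|.
Proof.
move=> fs hm.
have sub : ~: (set0 |: Bad f s) \subset PSB f s.
  apply/subsetP => X; rewrite !inE negb_or negb_and negbK => /andP [X0 H]; rewrite X0 /=.
  by move: H; case: (f \in X).
have c1 := subset_leq_card sub.
have c2 := cardsC (set0 |: Bad f s).
rewrite cardsU1 card_setset in c2.
have c3 : set0 \notin Bad f s by rewrite inE in_set0.
rewrite c3 in c2.
have c4 := card_Bad_le fs.
have e : 2 ^ m = 4 * 2 ^ (m - 2) by rewrite -{1}(subnK hm) expnD mulnC.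
rewrite e /= in c2. move: c1 c2 c4; clear. rewrite -?plusE -?minusE -?multE; intros; prep; try apply/leP.
set x := #|~: (set0 |: Bad f s)| in c1 c2. set y := #|Bad f s| in c2 c4. set z := 2 ^ _ in c2 c4 *. set P := #|PSB f s| in c1 *. lia.
Qed.

Notation Sig m n := ({ffun 'I_m -> 'I_m} * {ffun 'I_n -> 'I_n})%type.

Definition oo k (h : 1 < k) : 'I_k := Ordinal (ltnW h).
Definition o1 k (h : 1 < k) : 'I_k := Ordinal h.

Lemma oo_o1 k (h : 1 < k) : (oo h == o1 h) = false.
Proof. by []. Qed.

Definition WM m n (hm : 1 < m) : dfa (Sig m n) m :=
  DFA (fun x (a : Sig m n) => a.1 x) (oo hm) [set o1 hm].
Definition WN m n (hn : 1 < n) : dfa (Sig m n) n :=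
  DFA (fun q (a : Sig m n) => a.2 q) (oo hn) [set o1 hn].
Arguments WM m n hm : clear implicits.
Arguments WN m n hn : clear implicits.

Definition sfun m (hm : 1 < m) : {ffun 'I_m -> 'I_m} := [ffun x : 'I_m => insubd (oo hm) x.+1].
Definition sigma m n (hm : 1 < m) : Sig m n := (sfun hm, [ffun q => q]).
Arguments sigma m n hm : clear implicits.

Definition Ik m k : {set 'I_m} := [set x : 'I_m | x < k].

Lemma val_sfun m (hm : 1 < m) (x : 'I_m) : x.+1 < m -> val (sfun hm x) = x.+1.
Proof. by move=> h; rewrite /sfun ffunE val_insubd h. Qed.

Lemma img_I m n hm k : 0 < k -> k < m ->
  [set delta (WM m n hm) x (sigma m n hm) | x in Ik m k] =
  [set y : 'I_m | (0 < y) && (y <= k)].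
Proof.
move=> k0 km; apply/setP => y; rewrite inE; apply/imsetP/andP.
  move=> [x]; rewrite inE => xk ->; rewrite /= val_sfun //.
  exact: leq_ltn_trans xk km.
move=> [y0 yk]; have hy : y.-1 < m by apply: leq_ltn_trans (leq_pred y) (ltn_ord y).
exists (Ordinal hy); first by rewrite inE /= prednK.
apply: val_inj; rewrite /= val_sfun /= prednK //.
Qed.

Lemma step_I m n hm k : 0 < k -> k < m ->
  stepX (WM m n hm) (Ik m k) (sigma m n hm) = Ik m k.+1.
Proof.
move=> k0 km; rewrite /stepX img_I //.
have h1 : o1 hm \in [set y : 'I_m | (0 < y) && (y <= k)] by rewrite inE /= k0.
rewrite ifT; last by apply/set0Pn; exists (o1 hm); rewrite inE h1 /= in_set1 eqxx.
apply/setP => y; rewrite in_setU1 !inE; case: (y =P oo hm) => [-> //|ne] /=.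
have y0 : 0 < y by rewrite lt0n; apply/eqP => h; apply: ne; apply: val_inj.
by rewrite y0.
Qed.

Lemma fold_I m n hm j k : 0 < k -> k + j <= m ->
  foldl (stepX (WM m n hm)) (Ik m k) (nseq j (sigma m n hm)) = Ik m (k + j).
Proof.
elim: j k => [|j IH] k k0 kj; first by rewrite addn0.
rewrite /= step_I //; last by apply: leq_trans kj; rewrite addnS ltnS leq_addr.
by rewrite IH // addSnnS.
Qed.

Lemma Ik1 m hm : Ik m 1 = [set oo hm].
Proof. by apply/setP => y; rewrite !inE ltnS leqn0; apply/eqP/eqP => [h|->] //; apply: val_inj. Qed.

Lemma Ikm m : Ik m m = [set: 'I_m].
Proof. by apply/setP => y; rewrite !inE ltn_ord. Qed.

Definition ell m n (hm : 1 < m) (X : {set 'I_m}) (q : 'I_n) : Sig m n :=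
  ([ffun y => if y \in X then y else odflt (oo hm) [pick x in X]], [ffun _ => q]).

Lemma stepX_ell m n hm X q : X \in PSB (o1 hm) (oo hm) ->
  stepX (WM m n hm) [set: 'I_m] (ell hm X q) = X.
Proof.
rewrite inE => /andP [X0 H].
have img : [set delta (WM m n hm) x (ell hm X q) | x in [set: 'I_m]] = X.
  apply/setP => y; apply/imsetP/idP => [[x _ ->]|yX]; last by exists y => //; rewrite /= ffunE yX.
  rewrite /= ffunE; case: ifP => // _; case: pickP => [z zX //|none].
  by case/set0Pn: X0 => z; rewrite none.
rewrite /stepX img; case: ifP => // /set0Pn [z /setIP [zX]]; rewrite /= in_set1 => /eqP zE.
rewrite zE in zX; have sX := implyP H zX.
by apply/setUidPr; rewrite sub1set.
Qed.

Definition wd m n (hm : 1 < m) (t : option ({set 'I_m} * 'I_n)) : seq (Sig m n) :=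
  if t is Some (X, q) then sigma m n hm :: nseq (m - 2) (sigma m n hm) ++ [:: ell hm X q]
  else [::].

Lemma reach m n hm hn t : t \in RR n (PSB (o1 hm) (oo hm)) ->
  foldl (sdelta (WM m n hm) (WN m n hn)) None (wd hm t) = t.
Proof.
case: t => [[X q]|] //; rewrite mem_RR_some => hX.
rewrite /= sfold_some foldl_cat cats1 /dfa_run foldl_rcons /= ffunE.
rewrite -Ik1 step_I // fold_I //; last by rewrite subnKC.
by rewrite subnKC // Ikm stepX_ell.
Qed.

Lemma stepX_acc (S : finType) m (M : dfa S m) (X : {set 'I_m}) a :
  (stepX M X a :&: final M != set0) = ([set delta M x a | x in X] :&: final M != set0).
Proof.
rewrite /stepX; case: ifP => // h; apply/set0Pn; case/set0Pn: h => z /setIP [zY zF].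
by exists z; apply/setIP; split => //; rewrite in_setU1 zY orbT.
Qed.

Lemma set1_neq0 (T : finType) (Y : {set T}) o : (Y :&: [set o] != set0) = (o \in Y).
Proof.
apply/set0Pn/idP => [[z /setIP [zY /set1P zE]]|oY]; first by rewrite -zE.
by exists o; apply/setIP; split => //; rewrite in_set1.
Qed.

Lemma acc1 (m n : nat) (hm : 1 < m) (hn : 1 < n) (X : {set 'I_m}) q a :
  sacc (WM m n hm) (WN m n hn) (foldl (sdelta (WM m n hm) (WN m n hn)) (Some (X, q)) [:: a])
   = (o1 hm \in [set a.1 x | x in X]) || (a.2 q == o1 hn).
Proof. by rewrite /= stepX_acc set1_neq0 in_set1. Qed.

Definition sep m n (hm : 1 < m) (hn : 1 < n) (x : 'I_m) : Sig m n :=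
  ([ffun y => if y == x then o1 hm else oo hm], [ffun _ => oo hn]).
Definition qsep m n (hm : 1 < m) (hn : 1 < n) (q' : 'I_n) : Sig m n :=
  ([ffun _ => oo hm], [ffun y => if y == q' then o1 hn else oo hn]).

Lemma o1_oo k (h : 1 < k) : (o1 h == oo h) = false.
Proof. by []. Qed.

Lemma sep_acc (m n : nat) (hm : 1 < m) (hn : 1 < n) (X : {set 'I_m}) q x :
  (o1 hm \in [set (sep hm hn x).1 y | y in X]) || ((sep hm hn x).2 q == o1 hn) = (x \in X).
Proof.
rewrite /= ffunE oo_o1 orbF; apply/imsetP/idP => [[y yX]|xX]; last by exists x; rewrite // ffunE eqxx.
rewrite ffunE; case: (y =P x) => [<- //|_] h.
by move: (o1_oo hm); rewrite {1}h eqxx.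
Qed.

Lemma qsep_acc (m n : nat) (hm : 1 < m) (hn : 1 < n) (X : {set 'I_m}) q q' :
  (o1 hm \in [set (qsep hm hn q').1 y | y in X]) || ((qsep hm hn q').2 q == o1 hn) = (q == q').
Proof.
have -> : (o1 hm \in [set (qsep hm hn q').1 y | y in X]) = false.
  apply/imsetP => -[y _]; rewrite ffunE => h; by move: (o1_oo hm); rewrite {1}h eqxx.
by rewrite /= ffunE; case: (q =P q') => _; rewrite ?eqxx ?oo_o1.
Qed.

Lemma dist_none (m n : nat) (hm : 1 < m) (hn : 1 < n) (X : {set 'I_m}) q : X \in PSB (o1 hm) (oo hm) ->
  exists z, sacc (WM m n hm) (WN m n hn) (foldl (sdelta (WM m n hm) (WN m n hn)) None z)
        != sacc (WM m n hm) (WN m n hn) (foldl (sdelta (WM m n hm) (WN m n hn)) (Some (X, q)) z).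
Proof.
rewrite inE => /andP [X0 _].
have nn : forall a, foldl (sdelta (WM m n hm) (WN m n hn)) None [:: a] =
   foldl (sdelta (WM m n hm) (WN m n hn)) (Some ([set oo hm], oo hn)) [:: a] by [].
case: (boolP [exists x in X, x != oo hm]) => [/existsP [x /andP [xX xo]]|/existsPn h].
  exists [:: sep hm hn x]; rewrite nn !acc1 !sep_acc xX in_set1. by rewrite (negbTE xo).
have XE : X = [set oo hm].
  apply/setP => y; rewrite in_set1; apply/idP/eqP => [yX|->].
    by have := h y; rewrite yX /= negbK => /eqP.
  case/set0Pn: X0 => z zX; have := h z; rewrite zX /= negbK => /eqP <-; exact: zX.
subst X; case: (q =P oo hn) => [->|qo].
  exists [::]; rewrite /= set1_neq0 !in_set1. by [].
exists [:: qsep hm hn q]; rewrite nn !acc1 !qsep_acc eqxx.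
by apply/eqP => h'; apply: qo; apply/eqP; rewrite eq_sym h'.
Qed.

Lemma dist_some (m n : nat) (hm : 1 < m) (hn : 1 < n) (X1 X2 : {set 'I_m}) q1 q2 :
  X1 \in PSB (o1 hm) (oo hm) -> (X1, q1) != (X2, q2) ->
  exists z, sacc (WM m n hm) (WN m n hn) (foldl (sdelta (WM m n hm) (WN m n hn)) (Some (X1, q1)) z)
        != sacc (WM m n hm) (WN m n hn) (foldl (sdelta (WM m n hm) (WN m n hn)) (Some (X2, q2)) z).
Proof.
move=> _ ne.
case: (boolP [exists x, (x \in X1) != (x \in X2)]) => [/existsP [x hx]|/existsPn h].
  by exists [:: sep hm hn x]; rewrite !acc1 !sep_acc.
have XE : X1 = X2 by apply/setP => y; have := h y; rewrite negbK => /eqP.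
subst X2; exists [:: qsep hm hn q1]; rewrite !acc1 !qsep_acc eqxx eq_sym.
apply/negP => /eqP /eqP e; by rewrite e eqxx in ne.
Qed.

Theorem theorem3 (m n : nat) (hm : 2 <= m) (hn : 2 <= n) :
  (forall (S : finType) (M : dfa S m) (N : dfa S n),
     exists k, k <= sc_bound m n /\
       exists D : dfa S k, recognizes D (star_union M N)) /\
  (exists (S : finType) (M : dfa S m) (N : dfa S n),
     sc_eq (star_union M N) (sc_bound m n)).
Proof.
split; first by move=> S M N; exact: upper.
exists (Sig m n), (WM m n hm), (WN m n hn); split.
  have [k [hk [D HD]]] := upper (WM m n hm) (WN m n hn) hm.
  have [D' HD'] := pad_dfa D hk.
  exists D' => w; split => h; [apply/HD/HD' | apply/HD'/HD]; exact: h.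
move=> j D rec.
pose R := RR n (PSB (o1 hm) (oo hm)).
pose sd := sdelta (WM m n hm) (WN m n hn).
have dist : forall t1 t2, t1 \in R -> t2 \in R -> t1 != t2 ->
     exists z, ~ (star_union (WM m n hm) (WN m n hn) (wd hm t1 ++ z) <->
                  star_union (WM m n hm) (WN m n hn) (wd hm t2 ++ z)).
  move=> t1 t2 h1 h2 ne.
  have [z hz] : exists z, sacc (WM m n hm) (WN m n hn) (foldl sd t1 z)
                       != sacc (WM m n hm) (WN m n hn) (foldl sd t2 z).
    case: t1 t2 h1 h2 ne => [[X1 q1]|] [[X2 q2]|] h1 h2 ne; rewrite ?mem_RR_some in h1 h2.
    - apply: dist_some h1 _; by apply: contra ne => /eqP ->.
    - have [z hz] := dist_none hn q1 h1; exists z; by rewrite eq_sym.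
    - exact: dist_none.
    - by rewrite eqxx in ne.
  exists z.
  have e : forall t, t \in R -> (star_union (WM m n hm) (WN m n hn) (wd hm t ++ z) <->
                                 sacc (WM m n hm) (WN m n hn) (foldl sd t z)).
    by move=> t ht; rewrite -sdelta_correct foldl_cat reach.
  rewrite (e _ h1) (e _ h2) => H; move/negP: hz; apply; apply/eqP; apply/idP/idP => h; by apply/H.
apply: leq_trans (@mn_lower (Sig m n) (star_union (WM m n hm) (WN m n hn)) _ R (wd hm) dist j D rec).
rewrite card_RR /sc_bound addnC leq_add2l.
have o1o : o1 hm != oo hm by rewrite o1_oo.
by have := leq_mul (card_PSB_ge o1o hm) (leqnn n); rewrite mulnBl mul1n.
Qed.
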